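(* Let $(G,\cdot)$ be a loop with identity $e$ and let $(H,\cdot)$ be a non-trivial subloop of $G$. Suppose that $(xs\cdot z)s=x(sz\cdot s)$ for all $x,z\in G$ and all $s\in H$. Then: (i) $xs\cdot s^\rho=x$ for all $x\in G$ and $s\in H$; (ii) $x\cdot ss=xs\cdot s$ for all $x\in G$ and $s\in H$.
   Context: Juxtaposition binds more tightly than $\cdot$; e.g. $xs\cdot z$ means $(xs)z$. For $x$ in a loop with identity $e$, the right inverse $x^\rho$ is the unique element with $xx^\rho=e$. *)

(* Defs.v *)
Definition is_loop {G : Type} (op : G -> G -> G) (e : G) : Prop :=
  (forall x, op e x = x /\ op x e = x) /\
  (forall a b, exists! x, op a x = b) /\
  (forall a b, exists! y, op y a = b).

Definition is_subloop {G : Type} (op : G -> G -> G) (e : G) (H : G -> Prop) : Prop :=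
  H e /\
  (forall a b, H a -> H b -> H (op a b)) /\
  (forall a b x, H a -> H b -> op a x = b -> H x) /\
  (forall a b y, H a -> H b -> op y a = b -> H y).

Definition nontrivial {G : Type} (e : G) (H : G -> Prop) : Prop :=
  exists s, H s /\ s <> e.

Definition is_rinv {G : Type} (op : G -> G -> G) (e : G) (s r : G) : Prop :=
  op s r = e.

(* Main.v *)
Require Import Defs.

Theorem theorem3p1 (G : Type) (op : G -> G -> G) (e : G) (H : G -> Prop)
  (HG : is_loop op e) (HH : is_subloop op e H) (Hnt : nontrivial e H)
  (Hid : forall x z s, H s ->
           op (op (op x s) z) s = op x (op (op s z) s)) :
  (forall x s r, H s -> is_rinv op e s r -> op (op x s) r = x) /\
  (forall x s, H s -> op x (op s s) = op (op x s) s).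
Proof.
  destruct HG as [Hunit [_ Hdiv]].
  split.
  - intros x s r Hs Hr. unfold is_rinv in Hr.
    pose proof (Hid x r s Hs) as E. rewrite Hr in E.
    destruct (Hunit s) as [E1 _]. rewrite E1 in E.
    destruct (Hdiv s (op x s)) as [y [_ Hu]].
    assert (A := Hu _ E). assert (B := Hu x eq_refl). congruence.
  - intros x s Hs.
    pose proof (Hid x e s Hs) as E.
    destruct (Hunit (op x s)) as [_ E1]. destruct (Hunit s) as [_ E2].
    rewrite E1, E2 in E. symmetry. exact E.
Qed.
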